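(* For every $n\in\{0,1,2,\dots\}$, \[ {}_2F_1\Big(n+\tfrac12,n+1;n+\tfrac32;-1\Big)=\frac{(2n+1)!!}{(2n)!!}\,\frac{\pi}{4}+\frac{2n+1}{2^{2n}}\sum_{k=1}^{n}(-1)^k\binom{2n-k}{n}\frac{2^{k/2}}{k}\sin\frac{3k\pi}{4}. \]
   Context: ${}_2F_1(\alpha,\beta;\gamma;z)=\sum_{n\ge0}\frac{(\alpha)_n(\beta)_n}{(\gamma)_n}\frac{z^n}{n!}$ is Gauss' hypergeometric function, with $(a)_n=a(a+1)\cdots(a+n-1)$. Its value at $-1$ is that of its analytic continuation to $\mathbb{C}\setminus(1,\infty)$. $(2n)!!=2^nn!$ with $0!!=1$, and $(2n+1)!!=1\cdot3\cdots(2n+1)$. An empty sum is $0$. *)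

(* Defs.v *)
From Stdlib Require Import Reals Arith.
From Coquelicot Require Import Coquelicot.
Open Scope R_scope.

Fixpoint poch (a : R) (n : nat) : R :=
  match n with
  | O => 1
  | S m => poch a m * (a + INR m)
  end.

Definition hyp2F1_series (a b c x : R) : R :=
  Series (fun n => poch a n * poch b n / poch c n * x ^ n / INR (Factorial.fact n)).

Fixpoint dfact (m : nat) : nat :=
  match m with
  | O => 1%nat
  | S O => 1%nat
  | S ((S p) as q) => (m * dfact p)%nat
  end.

(* Main.v *)
Require Import Defs.
From Stdlib Require Import Reals Lia Lra.
From Coquelicot Require Import Coquelicot.
Open Scope R_scope.
Definition ssum (a : nat -> R) (n m : nat) : R := sum_n_m a n m.

Lemma sR_plus (u v : nat -> R) n m :
  ssum (fun k => u k + v k) n m = ssum u n m + ssum v n m.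
Proof. exact (sum_n_m_plus u v n m). Qed.
Lemma sR_scal (a : R) (u : nat -> R) n m :
  ssum (fun k => a * u k) n m = a * ssum u n m.
Proof. exact (sum_n_m_mult_l a u n m). Qed.
Lemma sR_first (a : nat -> R) n m : (n <= m)%nat ->
  ssum a n m = a n + ssum a (S n) m.
Proof. intros H; exact (sum_Sn_m a n m H). Qed.
Lemma sR_last (a : nat -> R) n m : (n <= S m)%nat ->
  ssum a n (S m) = ssum a n m + a (S m).
Proof. intros H; exact (sum_n_Sm a n m H). Qed.
Lemma sR_shift (a : nat -> R) n m :
  ssum (fun k => a (S k)) n m = ssum a (S n) (S m).
Proof. exact (sum_n_m_S a n m). Qed.
Lemma sR_ext (a b : nat -> R) n m : (forall k, (n <= k <= m)%nat -> a k = b k) ->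
  ssum a n m = ssum b n m.
Proof. intros H; exact (sum_n_m_ext_loc a b n m H). Qed.

Definition L (f : nat -> R) (a b : nat) (v : nat -> R) :=
  ssum (fun k => f k * v k) a b.
Lemma L_plus f a b v1 v2 : L f a b (fun k => v1 k + v2 k) = L f a b v1 + L f a b v2.
Proof. unfold L. rewrite <- sR_plus. apply sR_ext; intros; ring. Qed.
Lemma L_minus f a b v1 v2 : L f a b (fun k => v1 k - v2 k) = L f a b v1 - L f a b v2.
Proof. unfold L. replace (ssum (fun k => f k * v1 k) a b - ssum (fun k => f k * v2 k) a b)
  with (ssum (fun k => f k * v1 k) a b + (-1) * ssum (fun k => f k * v2 k) a b) by ring.
  rewrite <- sR_scal, <- sR_plus. apply sR_ext; intros; ring. Qed.

Fixpoint uw (k : nat) : R * R :=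
  match k with O => (1, 0) | S k => let (a, b) := uw k in (a + b, b - a) end.
Definition u k := fst (uw k).
Definition w k := snd (uw k).
Lemma u_S k : u (S k) = u k + w k.
Proof. unfold u, w; simpl; destruct (uw k); reflexivity. Qed.
Lemma w_S k : w (S k) = w k - u k.
Proof. unfold u, w; simpl; destruct (uw k); reflexivity. Qed.
Lemma u_0 : u 0 = 1. Proof. reflexivity. Qed.
Lemma w_0 : w 0 = 0. Proof. reflexivity. Qed.

Lemma Cfact a b : Binomial.C (a + b) a = INR (Factorial.fact (a+b)) / (INR (Factorial.fact a) * INR (Factorial.fact b)).
Proof. unfold Binomial.C. replace (a + b - a)%nat with b by lia. reflexivity. Qed.

Definition X n := L (fun k => Binomial.C (2*n - k) n) 0 n.
Definition Z n := L (fun k => Binomial.C (2*n + 1 - k) n) 0 (S n).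
Definition Z' n := L (fun k => Binomial.C (2*n + 1 - k) (S n)) 0 n.

Lemma Z_shift n v : Z n v = Binomial.C (2*n+1) n * v 0%nat + X n (fun k => v (S k)).
Proof.
  unfold Z, X, L. rewrite sR_first by lia. rewrite Nat.sub_0_r. f_equal.
  rewrite <- sR_shift. apply sR_ext; intros k _. f_equal. f_equal. lia.
Qed.

Lemma X1_shift n v : X (S n) v = Binomial.C (2*n+2) (S n) * v 0%nat + Z' n (fun k => v (S k)).
Proof.
  unfold Z', X, L. rewrite sR_first by lia. rewrite Nat.sub_0_r.
  replace (2 * S n)%nat with (2*n+2)%nat by lia. f_equal.
  rewrite <- sR_shift. apply sR_ext; intros k _. f_equal. f_equal. lia.
Qed.

Lemma X1_pascal n v : X (S n) v = Z' n v + Z n v.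
Proof.
  unfold Z', X, Z, L. rewrite !sR_last by lia.
  replace (2 * S n - S n)%nat with (S n) by lia.
  replace (2 * n + 1 - S n)%nat with n by lia.
  rewrite !C_n_n.
  replace (ssum (fun k : nat => Binomial.C (2 * S n - k) (S n) * v k) 0 n)
    with (ssum (fun k => Binomial.C (2 * n + 1 - k) (S n) * v k) 0 n +
          ssum (fun k => Binomial.C (2 * n + 1 - k) n * v k) 0 n).
  ring.
  rewrite <- sR_plus. apply sR_ext; intros k Hk.
  rewrite <- Rmult_plus_distr_r. f_equal.
  replace (2 * S n - k)%nat with (S (2*n+1-k)) by lia.
  rewrite <- pascal by lia. ring.
Qed.

Lemma C_mid n : Binomial.C (2*n+2) (S n) = 2 * Binomial.C (2*n+1) n.
Proof.
  replace (2*n+2)%nat with (S (2*n+1)) by lia.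
  rewrite <- pascal by lia.
  rewrite (pascal_step1 (2*n+1) (S n)) by lia.
  replace (2 * n + 1 - S n)%nat with n by lia. ring.
Qed.

Lemma L_ext f a b v1 v2 : (forall k, v1 k = v2 k) -> L f a b v1 = L f a b v2.
Proof. intros H; unfold L; apply sR_ext; intros; rewrite H; reflexivity. Qed.

Lemma E_rec n : X (S n) u + X (S n) w = 2 * (X n u + X n w).
Proof.
  assert (Zu : Z n u = Binomial.C (2*n+1) n + X n u + X n w).
  { rewrite Z_shift, u_0. unfold X. rewrite (L_ext _ _ _ _ (fun k => u k + w k)) by (intros; apply u_S).
    rewrite L_plus. ring. }
  assert (Zw : Z n w = X n w - X n u).
  { rewrite Z_shift, w_0. unfold X. rewrite (L_ext _ _ _ _ (fun k => w k - u k)) by (intros; apply w_S).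
    rewrite L_minus. ring. }
  assert (X1u : X (S n) u = Binomial.C (2*n+2) (S n) + Z' n u + Z' n w).
  { rewrite X1_shift, u_0. unfold Z'. rewrite (L_ext _ _ _ _ (fun k => u k + w k)) by (intros; apply u_S).
    rewrite L_plus. ring. }
  assert (X1w : X (S n) w = Z' n w - Z' n u).
  { rewrite X1_shift, w_0. unfold Z'. rewrite (L_ext _ _ _ _ (fun k => w k - u k)) by (intros; apply w_S).
    rewrite L_minus. ring. }
  pose proof (X1_pascal n u) as Pu. pose proof (X1_pascal n w) as Pw.
  pose proof (C_mid n). lra.
Qed.

Lemma E_n n : X n u + X n w = 2 ^ n.
Proof.
  induction n as [|n IH].
  - unfold X, L, ssum. rewrite !sum_n_n. unfold u, w, Binomial.C. simpl. field.
  - rewrite E_rec, IH. simpl. ring.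
Qed.

Lemma Zw_lem n : Z n w = X n w - X n u.
Proof.
  rewrite Z_shift, w_0. unfold X. rewrite (L_ext _ _ _ _ (fun k => w k - u k)) by (intros; apply w_S).
  rewrite L_minus. ring.
Qed.

Definition Y m := L (fun k => Binomial.C (2*(S m) - k) m) 0 (S (S m)).

Lemma Z_pascal m v : Z (S m) v = X (S m) v + Y m v.
Proof.
  unfold Z, X, Y, L. rewrite !(sR_last _ 0 (S m)) by lia.
  replace (2 * S m + 1 - S (S m))%nat with (S m) by lia.
  replace (2 * S m - S (S m))%nat with m by lia.
  rewrite !C_n_n.
  replace (ssum (fun k : nat => Binomial.C (2 * S m + 1 - k) (S m) * v k) 0 (S m))
    with (ssum (fun k => Binomial.C (2 * S m - k) (S m) * v k) 0 (S m) +
          ssum (fun k => Binomial.C (2 * S m - k) m * v k) 0 (S m)).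
  ring.
  rewrite <- sR_plus. apply sR_ext; intros k Hk.
  rewrite <- Rmult_plus_distr_r. f_equal.
  replace (2 * S m + 1 - k)%nat with (S (2 * S m - k)) by lia.
  rewrite <- pascal by lia. ring.
Qed.

Lemma C_absorb m j : INR (S m) * Binomial.C (S m + j) (S m) = INR (S m + j) * Binomial.C (m + j) m.
Proof.
  rewrite !Cfact. replace (S m + j)%nat with (S (m + j)) by lia.
  rewrite !fact_simpl, !mult_INR.
  pose proof (INR_fact_neq_0 m). pose proof (INR_fact_neq_0 j). pose proof (INR_fact_neq_0 (m+j)).
  assert (INR (S m) <> 0) by (apply not_0_INR; lia).
  field. auto.
Qed.

Lemma weighted m v :
  ssum (fun k => INR k * Binomial.C (2*(S m) - k) m * v k) 0 (S (S m))
  = INR (2 * S m + 1) * Y m v - INR (S m) * Z (S m) v.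
Proof.
  unfold Y, Z, L.
  replace (INR (2 * S m + 1) * ssum (fun k : nat => Binomial.C (2 * S m - k) m * v k) 0 (S (S m)) -
   INR (S m) * ssum (fun k : nat => Binomial.C (2 * S m + 1 - k) (S m) * v k) 0 (S (S m)))
   with (INR (2 * S m + 1) * ssum (fun k : nat => Binomial.C (2 * S m - k) m * v k) 0 (S (S m)) +
   (- INR (S m)) * ssum (fun k : nat => Binomial.C (2 * S m + 1 - k) (S m) * v k) 0 (S (S m))) by ring.
  rewrite <- !sR_scal, <- sR_plus. apply sR_ext; intros k Hk.
  replace (2 * S m - k)%nat with (m + (m + 2 - k))%nat by lia.
  replace (2 * S m + 1 - k)%nat with (S m + (m + 2 - k))%nat by lia.
  pose proof (C_absorb m (m + 2 - k)) as H.
  replace (INR (S m + (m + 2 - k))) with (INR (2 * S m + 1) - INR k) in H.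
  2:{ rewrite <- minus_INR by lia. f_equal. lia. }
  set (j := (m + 2 - k)%nat) in *.
  replace (- INR (S m) * (Binomial.C (S m + j) (S m) * v k))
    with (- (INR (S m) * Binomial.C (S m + j) (S m)) * v k) by ring.
  rewrite H. ring.
Qed.

Lemma I_lem m :
  ssum (fun k => (INR k - 1) * Binomial.C (2*(S m) - k) m * w k) 1 (S (S m))
  = - INR (S m) * 2 ^ (S m).
Proof.
  assert (H0 : ssum (fun k => (INR k - 1) * Binomial.C (2*(S m) - k) m * w k) 0 (S (S m))
              = ssum (fun k => (INR k - 1) * Binomial.C (2*(S m) - k) m * w k) 1 (S (S m))).
  { rewrite sR_first by lia. rewrite w_0. ring. }
  rewrite <- H0.
  assert (H1 : ssum (fun k => (INR k - 1) * Binomial.C (2*(S m) - k) m * w k) 0 (S (S m))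
    = ssum (fun k => INR k * Binomial.C (2*(S m) - k) m * w k) 0 (S (S m)) + (-1) * Y m w).
  { unfold Y, L. rewrite <- sR_scal, <- sR_plus. apply sR_ext; intros; ring. }
  rewrite H1, weighted.
  pose proof (Z_pascal m w) as P. pose proof (Zw_lem (S m)) as Q. pose proof (E_n (S m)) as E.
  assert (Yw : Y m w = - X (S m) u) by lra.
  rewrite Yw, Q, <- E. rewrite plus_INR, mult_INR, S_INR. simpl (INR 2). simpl (INR 1). ring.
Qed.

Lemma coef m j : (j <= m)%nat ->
  (2*(INR m+1)+2) * Binomial.C (S (S m) + S j) (S (S m)) / (INR m + 1 - INR j)
  - 4*(2*(INR m+1)+1) * Binomial.C (S m + j) (S m) / (INR m + 1 - INR j)
  = 2/(INR m+1) * (INR m + 1 - INR j - 1) * Binomial.C (m + S j) m.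
Proof.
  intros Hj.
  rewrite !Cfact.
  replace (S (S m) + S j)%nat with (S (S (S (m + j)))) by lia.
  replace (S m + j)%nat with (S (m + j)) by lia.
  replace (m + S j)%nat with (S (m + j)) by lia.
  rewrite !fact_simpl, !mult_INR, !S_INR, plus_INR.
  pose proof (INR_fact_neq_0 m). pose proof (INR_fact_neq_0 j). pose proof (INR_fact_neq_0 (m+j)).
  pose proof (pos_INR m). pose proof (pos_INR j).
  assert (INR j <= INR m) by (apply le_INR; lia).
  assert (INR m + 1 - INR j <> 0) by lra.
  field. repeat split; lra.
Qed.

Definition Sn n := ssum (fun k => Binomial.C (2*n - k) n * w k / INR k) 1 n.

Lemma Srec n : (2*INR n + 2) * Sn (S n) = 4*(2*INR n + 1) * Sn n - 2 ^ (S n).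
Proof.
  destruct n as [|m].
  - unfold Sn, ssum. rewrite sum_n_n. rewrite sum_n_m_zero by lia.
    unfold w, Binomial.C. simpl. unfold zero; simpl. field.
  - unfold Sn. rewrite (sR_last _ 1 (S m)) by lia.
    replace (2 * S (S m) - S (S m))%nat with (S (S m)) by lia. rewrite C_n_n.
    assert (HS : (2 * INR (S m) + 2) * ssum (fun k => Binomial.C (2 * S (S m) - k) (S (S m)) * w k / INR k) 1 (S m)
       - 4 * (2 * INR (S m) + 1) * ssum (fun k => Binomial.C (2 * S m - k) (S m) * w k / INR k) 1 (S m)
       = 2 / (INR m + 1) * ssum (fun k => (INR k - 1) * Binomial.C (2*(S m) - k) m * w k) 1 (S m)).
    { rewrite <- !sR_scal.
      replace (ssum (fun k => (2 * INR (S m) + 2) * (Binomial.C (2 * S (S m) - k) (S (S m)) * w k / INR k)) 1 (S m) -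
        ssum (fun k => 4 * (2 * INR (S m) + 1) * (Binomial.C (2 * S m - k) (S m) * w k / INR k)) 1 (S m))
      with (ssum (fun k => (2 * INR (S m) + 2) * (Binomial.C (2 * S (S m) - k) (S (S m)) * w k / INR k)) 1 (S m) +
        (-1) * ssum (fun k => 4 * (2 * INR (S m) + 1) * (Binomial.C (2 * S m - k) (S m) * w k / INR k)) 1 (S m)) by ring.
      rewrite <- sR_scal, <- sR_plus. apply sR_ext; intros k Hk.
      set (j := (S m - k)%nat).
      assert (Hj : (j <= m)%nat) by (unfold j; lia).
      pose proof (coef m j Hj) as Hc.
      replace (2 * S (S m) - k)%nat with (S (S m) + S j)%nat by (unfold j; lia).
      replace (2 * S m - k)%nat with (S m + j)%nat by (unfold j; lia).
      replace (m + S j)%nat with (S m + j)%nat in Hc by lia.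
      assert (Hk' : INR k = INR m + 1 - INR j).
      { unfold j. rewrite minus_INR by lia. rewrite S_INR. ring. }
      rewrite Hk', S_INR.
      assert (INR m + 1 - INR j <> 0) by (rewrite <- Hk'; apply not_0_INR; lia).
      transitivity (w k * ((2*(INR m+1)+2) * Binomial.C (S (S m) + S j) (S (S m)) / (INR m + 1 - INR j)
        - 4*(2*(INR m+1)+1) * Binomial.C (S m + j) (S m) / (INR m + 1 - INR j))).
      { field. auto. }
      rewrite Hc. ring. }
    pose proof (I_lem m) as HI.
    rewrite (sR_last _ 1 (S m)) in HI by lia.
    replace (2 * S m - S (S m))%nat with m in HI by lia. rewrite C_n_n in HI.
    enough (HE : (2 * INR (S m) + 2) * (1 * w (S (S m)) / INR (S (S m))) + 2 ^ S (S m)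
       = - (2 / (INR m + 1) * ssum (fun k => (INR k - 1) * Binomial.C (2*(S m) - k) m * w k) 1 (S m))) by lra.
    replace (ssum (fun k => (INR k - 1) * Binomial.C (2*(S m) - k) m * w k) 1 (S m))
      with (- INR (S m) * 2 ^ S m - (INR (S (S m)) - 1) * 1 * w (S (S m))) by lra.
    rewrite !S_INR. simpl pow. field. pose proof (pos_INR m). lra.
Qed.

Lemma trig k :
  (-1)^k * Rpower 2 (INR k / 2) * sin (3 * INR k * PI / 4) = w k /\
  (-1)^k * Rpower 2 (INR k / 2) * cos (3 * INR k * PI / 4) = u k.
Proof.
  induction k as [|k [IHs IHc]].
  - simpl. replace (0/2) with 0 by field. replace (3*0*PI/4) with 0 by field.
    rewrite Rpower_O by lra. rewrite sin_0, cos_0. unfold u, w; simpl. split; ring.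
  - rewrite u_S, w_S, <- IHs, <- IHc. rewrite S_INR.
    replace ((INR k + 1)/2) with (INR k / 2 + /2) by field.
    rewrite Rpower_plus, Rpower_sqrt by lra.
    replace (3 * (INR k + 1) * PI / 4) with (3 * INR k * PI / 4 + (PI - PI/4)) by field.
    rewrite sin_plus, cos_plus, sin_PI_x, Rtrigo_facts.cos_pi_minus, sin_PI4, cos_PI4.
    assert (H2 : sqrt 2 * sqrt 2 = 2) by (apply sqrt_sqrt; lra).
    assert (0 < sqrt 2) by (apply sqrt_lt_R0; lra).
    simpl pow. split; field_simplify; try lra; rewrite H2; field.
Qed.

Fixpoint rr (n : nat) : R := match n with O => 1 | S m => rr m * (2 * INR m + 1) / (2 * INR m + 2) end.

Fixpoint Qf (n : nat) (s : R) : R :=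
  match n with
  | O => atan s
  | S m => ((2 * INR m + 1) * Qf m s - s ^ (2*m+1) / (1 + s^2) ^ (S m)) / (2 * INR m + 2)
  end.

Lemma Qclosed n : Qf n 1 = rr n * PI / 4 + Sn n / 4 ^ n.
Proof.
  induction n as [|n IH].
  - simpl. rewrite atan_1. unfold Sn, ssum. rewrite sum_n_m_zero by lia. unfold zero; simpl. field.
  - simpl Qf. rewrite IH.
    pose proof (Srec n) as H.
    assert (Hn : 0 <= INR n) by apply pos_INR.
    assert (E : Sn (S n) = (4 * (2 * INR n + 1) * Sn n - 2 ^ S n) / (2 * INR n + 2))
      by (apply (Rmult_eq_reg_l (2 * INR n + 2)); [rewrite H; field | ]; lra).
    rewrite E. simpl rr. rewrite pow1.
    replace (1 + 1^2) with 2 by ring.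
    replace 4 with (2*2) by ring. rewrite !Rpow_mult_distr.
    assert (2 ^ n <> 0) by (apply pow_nonzero; lra).
    simpl pow. replace (1 + 1 * (1 * 1)) with 2 by ring. field. lra.
Qed.

Lemma dfact_SS p : dfact (S (S p)) = (S (S p) * dfact p)%nat.
Proof. reflexivity. Qed.

Lemma dfact_pos p : (0 < dfact p)%nat.
Proof.
  assert (forall p, (0 < dfact p)%nat /\ (0 < dfact (S p))%nat) as H.
  { induction p0 as [|p0 [H1 H2]]. simpl; lia. split; auto. rewrite dfact_SS. lia. }
  apply H.
Qed.

Lemma dfact_ratio n : INR (dfact (2*n+1)) / INR (dfact (2*n)) = (2 * INR n + 1) * rr n.
Proof.
  induction n as [|n IH].
  - simpl. field.
  - replace (2 * S n + 1)%nat with (S (S (2*n+1))) by lia.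
    replace (2 * S n)%nat with (S (S (2*n))) by lia.
    rewrite !dfact_SS, !mult_INR.
    assert (0 < INR (dfact (2*n))) by (apply lt_0_INR, dfact_pos).
    assert (Hn : 0 <= INR n) by apply pos_INR.
    assert (IH' : INR (dfact (2*n+1)) = (2*INR n+1)*rr n * INR (dfact (2*n)))
      by (rewrite <- IH; field; lra).
    simpl rr. rewrite IH'.
    replace (INR (S (S (2 * n + 1)))) with (2 * INR n + 3) by (rewrite !S_INR, plus_INR, mult_INR; simpl; ring).
    replace (INR (S (S (2 * n)))) with (2 * INR n + 2) by (rewrite !S_INR, mult_INR; simpl; ring).
    rewrite S_INR. field. lra.
Qed.

Lemma Qf_derive_base (s : R) : is_derive atan s (s ^ (2*0) / (1 + s^2) ^ 1).
Proof.
  replace (s ^ (2*0) / (1 + s^2) ^ 1) with (/ (1 + s²)).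
  apply is_derive_atan. unfold Rsqr. simpl. field.
  nra.
Qed.

Lemma Qf_derive n (s : R) : is_derive (Qf n) s (s ^ (2*n) / (1 + s^2) ^ (S n)).
Proof.
  revert s. induction n as [|m IH]; intros s.
  - apply Qf_derive_base.
  - assert (Hd : ex_derive (Qf m) s) by (eexists; apply IH).
    change (Qf (S m)) with (fun s => ((2 * INR m + 1) * Qf m s - s ^ (2*m+1) / (1 + s^2) ^ (S m)) / (2 * INR m + 2)).
    auto_derive.
    + split; auto. split; auto. apply Rmult_integral_contrapositive; split; try apply pow_nonzero; nra.
    + change (fun x => Qf m x) with (Qf m). rewrite (is_derive_unique _ _ _ (IH s)).
      replace (match m with 0%nat => 1 | S _ => INR m + 1 end) with (INR m + 1) by (destruct m; simpl; ring).
      replace (m + (m + 0) + 1)%nat with (S (2*m)) by lia. rewrite Nat.pred_succ.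
      replace (s ^ S (2*m)) with (s * s^(2*m)) by reflexivity.
      replace (s ^ (2 * S m)) with (s^(2*m) * (s*s))
        by (replace (2*S m)%nat with (2*m+2)%nat by lia; rewrite pow_add; simpl; ring).
      rewrite S_INR, mult_INR. simpl (INR 2).
      replace (1 + s * (s * 1)) with (1 + s * s) by ring.
      replace (1 + s ^ 2) with (1 + s * s) by ring.
      replace ((1 + s * s) ^ S (S m)) with ((1 + s*s) * ((1 + s*s) * (1 + s * s)^m)) by reflexivity.
      replace ((1 + s * s) ^ S m) with ((1 + s*s) * (1 + s * s)^m) by reflexivity.
      assert (0 <= INR m) by apply pos_INR.
      set (t := s^(2*m)). set (P := (1 + s*s)^m).
      assert (0 < P) by (unfold P; apply pow_lt; nra).
      field. repeat split; intro; nra.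
Qed.

Lemma Qf_0 n : Qf n 0 = 0.
Proof.
  induction n as [|m IH]; simpl. apply atan_0.
  rewrite IH, pow_i by lia. unfold Rdiv. ring.
Qed.

Lemma const_deriv0 (f : R -> R) :
  (forall x, -1 < x < 1 -> is_derive f x 0) -> forall x, -1 < x < 1 -> f x = f 0.
Proof.
  intros Hd x Hx.
  destruct (MVT_gen f 0 x (fun _ => 0)) as [c [Hc Hf]].
  - intros y Hy. apply Hd. split.
    + apply Rlt_le_trans with (Rmin 0 x). unfold Rmin; destruct (Rle_dec 0 x); lra. lra.
    + apply Rle_lt_trans with (Rmax 0 x). lra. unfold Rmax; destruct (Rle_dec 0 x); lra.
  - intros y Hy. apply continuity_pt_filterlim. apply (ex_derive_continuous f y).
    eexists. apply Hd. split.
    + apply Rlt_le_trans with (Rmin 0 x). unfold Rmin; destruct (Rle_dec 0 x); lra. lra.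
    + apply Rle_lt_trans with (Rmax 0 x). lra. unfold Rmax; destruct (Rle_dec 0 x); lra.
  - lra.
Qed.

Lemma poch_pos a k : 0 < a -> 0 < poch a k.
Proof.
  intros Ha. induction k as [|k IH]; simpl. lra.
  apply Rmult_lt_0_compat; auto. pose proof (pos_INR k). lra.
Qed.

Lemma poch_shift a k : poch a k * (a + INR k) = a * poch (a+1) k.
Proof.
  induction k as [|k IH]. simpl. ring.
  simpl poch. rewrite S_INR.
  replace (poch a k * (a + INR k) * (a + (INR k + 1))) with ((poch a k * (a + INR k)) * (a + (INR k + 1))) by ring.
  rewrite IH. ring.
Qed.

Lemma lim_ratio (al be : R) : 0 < be ->
  is_lim_seq (fun k => (al + INR k) / (be + INR k)) 1.
Proof.
  intros Hb.
  assert (H1 : is_lim_seq (fun k => be + INR k) p_infty).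
  { apply is_lim_seq_le_p_loc with INR. exists 0%nat. intros; lra. apply is_lim_seq_INR. }
  assert (H2 : is_lim_seq (fun k => / (be + INR k)) 0).
  { replace (Finite 0) with (Rbar_inv p_infty) by reflexivity. apply is_lim_seq_inv; auto. discriminate. }
  assert (H3 : is_lim_seq (fun k => 1 + (al - be) * / (be + INR k)) (1 + (al - be) * 0)).
  { apply is_lim_seq_plus'. apply is_lim_seq_const. apply is_lim_seq_mult'. apply is_lim_seq_const. exact H2. }
  replace (1 + (al - be) * 0) with 1 in H3 by ring.
  eapply is_lim_seq_ext; [|exact H3]. intros k. simpl. pose proof (pos_INR k). field. lra.
Qed.

Definition g n k := poch (INR n + 1) k / INR (Factorial.fact k).
Definition e n k := (INR n + /2) / (INR n + /2 + INR k) * g n k.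

Lemma g_pos n k : 0 < g n k.
Proof.
  unfold g. apply Rdiv_lt_0_compat. apply poch_pos. pose proof (pos_INR n); lra.
  apply lt_0_INR, Factorial.lt_O_fact.
Qed.

Lemma e_pos n k : 0 < e n k.
Proof.
  unfold e. pose proof (pos_INR n). pose proof (pos_INR k). pose proof (g_pos n k).
  apply Rmult_lt_0_compat; auto. apply Rdiv_lt_0_compat; lra.
Qed.

Lemma g_0 n : g n 0 = 1.
Proof. unfold g; simpl. field. Qed.

Lemma g_S n k : g n (S k) = g n k * (INR n + 1 + INR k) / (1 + INR k).
Proof.
  unfold g. simpl poch. rewrite fact_simpl, mult_INR, S_INR.
  pose proof (INR_fact_neq_0 k). pose proof (pos_INR k). field. lra.
Qed.

Lemma g_S' n k : INR (S k) * g n (S k) = (INR n + 1 + INR k) * g n k.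
Proof. rewrite g_S, S_INR. pose proof (pos_INR k). field. lra. Qed.

Lemma e_S n k : e n (S k) = e n k * ((INR n + /2 + INR k)/(INR n + /2 + 1 + INR k)) * ((INR n + 1 + INR k)/(1 + INR k)).
Proof.
  unfold e. rewrite g_S, S_INR. pose proof (pos_INR k). pose proof (pos_INR n).
  field. repeat split; lra.
Qed.

Lemma radius_g n : CV_radius (g n) = 1.
Proof.
  replace 1 with (/ 1) by apply Rinv_1.
  apply CV_radius_finite_DAlembert.
  - intros k. apply Rgt_not_eq, g_pos.
  - lra.
  - eapply is_lim_seq_ext; [| apply (lim_ratio (INR n + 1) 1); lra].
    intros k. simpl. rewrite g_S. pose proof (g_pos n k). pose proof (pos_INR n). pose proof (pos_INR k).
    replace (g n k * (INR n + 1 + INR k) / (1 + INR k) / g n k) with ((INR n + 1 + INR k)/(1 + INR k))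
      by (field; split; lra).
    rewrite Rabs_pos_eq. reflexivity. apply Rlt_le, Rdiv_lt_0_compat; lra.
Qed.

Lemma radius_e n : CV_radius (e n) = 1.
Proof.
  replace 1 with (/ 1) by apply Rinv_1.
  apply CV_radius_finite_DAlembert.
  - intros k. apply Rgt_not_eq, e_pos.
  - lra.
  - pose proof (pos_INR n).
    assert (HL : is_lim_seq (fun k => (INR n + /2 + INR k)/(INR n + /2 + 1 + INR k) * ((INR n + 1 + INR k)/(1 + INR k))) (1 * 1)).
    { apply is_lim_seq_mult'. apply lim_ratio; lra. apply lim_ratio; lra. }
    replace (1 * 1) with 1 in HL by ring.
    eapply is_lim_seq_ext; [| exact HL].
    intros k. simpl. rewrite e_S. pose proof (e_pos n k). pose proof (pos_INR k).
    replace (e n k * ((INR n + / 2 + INR k) / (INR n + / 2 + 1 + INR k)) * ((INR n + 1 + INR k) / (1 + INR k)) / e n k)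
      with ((INR n + / 2 + INR k) / (INR n + / 2 + 1 + INR k) * ((INR n + 1 + INR k) / (1 + INR k)))
      by (field; repeat split; lra).
    rewrite Rabs_pos_eq. reflexivity.
    apply Rlt_le, Rmult_lt_0_compat; apply Rdiv_lt_0_compat; lra.
Qed.

Lemma hyp_eq n x : hyp2F1_series (INR n + /2) (INR n + 1) (INR n + 3/2) x = PSeries (e n) x.
Proof.
  unfold hyp2F1_series, PSeries. apply Series_ext. intros k.
  unfold e, g.
  pose proof (poch_shift (INR n + /2) k) as H.
  replace (INR n + /2 + 1) with (INR n + 3/2) in H by field.
  pose proof (pos_INR n). pose proof (pos_INR k).
  assert (0 < poch (INR n + 3/2) k) by (apply poch_pos; lra).
  assert (0 < poch (INR n + /2) k) by (apply poch_pos; lra).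
  pose proof (INR_fact_neq_0 k).
  assert (E : poch (INR n + /2) k / poch (INR n + 3/2) k = (INR n + /2) / (INR n + /2 + INR k)).
  { assert (H' : poch (INR n + /2) k = (INR n + /2) * poch (INR n + 3/2) k / (INR n + /2 + INR k)).
    { apply (Rmult_eq_reg_r (INR n + /2 + INR k)). rewrite H. field. lra. lra. }
    rewrite H'. field. lra. }
  transitivity (poch (INR n + /2) k / poch (INR n + 3/2) k * (poch (INR n + 1) k / INR (Factorial.fact k)) * x ^ k).
  field. split; lra.
  rewrite E. reflexivity.
Qed.

Lemma in_g n (y : R) : Rabs y < 1 -> Rbar_lt (Rabs y) (CV_radius (g n)).
Proof. intros H. rewrite radius_g. exact H. Qed.
Lemma in_e n (y : R) : Rabs y < 1 -> Rbar_lt (Rabs y) (CV_radius (e n)).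
Proof. intros H. rewrite radius_e. exact H. Qed.
Lemma in_dg n (y : R) : Rabs y < 1 -> Rbar_lt (Rabs y) (CV_radius (PS_derive (g n))).
Proof. intros H. rewrite CV_radius_derive, radius_g. exact H. Qed.
Lemma in_de n (y : R) : Rabs y < 1 -> Rbar_lt (Rabs y) (CV_radius (PS_derive (e n))).
Proof. intros H. rewrite CV_radius_derive, radius_e. exact H. Qed.

Lemma S1 n (y : R) : Rabs y < 1 ->
  (1 - y) * PSeries (PS_derive (g n)) y = (INR n + 1) * PSeries (g n) y.
Proof.
  intros Hy.
  replace ((1 - y) * PSeries (PS_derive (g n)) y) with
    (PSeries (PS_derive (g n)) y - y * PSeries (PS_derive (g n)) y) by ring.
  rewrite <- PSeries_incr_1.
  assert (E1 := CV_radius_inside _ _ (in_dg n y Hy)).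
  assert (E2 := ex_pseries_incr_1 _ _ E1).
  rewrite <- (PSeries_minus _ _ _ E1 E2).
  rewrite <- PSeries_scal.
  apply PSeries_ext. intros k.
  assert (C : PS_derive (g n) k - PS_incr_1 (PS_derive (g n)) k = (INR n + 1) * g n k).
  { unfold PS_derive. destruct k as [|k].
    - simpl PS_incr_1. rewrite g_S'. simpl (INR 0). unfold zero; simpl. ring.
    - change (PS_incr_1 (fun n0 => INR (S n0) * g n (S n0)) (S k)) with (INR (S k) * g n (S k)).
      rewrite g_S'. rewrite (S_INR k). ring. }
  exact C.
Qed.

Lemma S2 n (y : R) : Rabs y < 1 ->
  2 * y * PSeries (PS_derive (e n)) y = (2 * INR n + 1) * (PSeries (g n) y - PSeries (e n) y).
Proof.
  intros Hy.
  rewrite Rmult_assoc, <- PSeries_incr_1.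
  assert (E1 := CV_radius_inside _ _ (in_g n y Hy)).
  assert (E2 := CV_radius_inside _ _ (in_e n y Hy)).
  rewrite <- (PSeries_minus _ _ _ E1 E2).
  rewrite <- !PSeries_scal.
  apply PSeries_ext. intros k.
  assert (C : 2 * PS_incr_1 (PS_derive (e n)) k = (2 * INR n + 1) * (g n k - e n k)).
  { assert (Hk : PS_incr_1 (PS_derive (e n)) k = INR k * e n k).
    { destruct k as [|k]. simpl. unfold zero; simpl. ring. reflexivity. }
    rewrite Hk. unfold e. pose proof (pos_INR n). pose proof (pos_INR k). field. lra. }
  exact C.
Qed.

Lemma abs_lt1 (y : R) : -1 < y < 1 -> Rabs y < 1.
Proof. intros H. unfold Rabs. destruct (Rcase_abs y); lra. Qed.

Lemma is_derive_eq (f : R -> R) (x l l' : R) : is_derive f x l -> l = l' -> is_derive f x l'.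
Proof. intros H E; subst; exact H. Qed.

Lemma Pg_val n (y : R) : -1 < y < 1 -> PSeries (g n) y = / (1 - y) ^ (S n).
Proof.
  intros Hy.
  set (h := fun y : R => PSeries (g n) y * (1 - y) ^ (S n)).
  assert (Hd : forall x, -1 < x < 1 -> is_derive h x 0).
  { intros x Hx.
    assert (D1 := is_derive_PSeries _ _ (in_g n x (abs_lt1 x Hx))).
    assert (D2 : is_derive (fun y : R => (1 - y) ^ (S n)) x (- INR (S n) * (1 - x) ^ n)).
    { auto_derive. auto.
      change (match n with 0%nat => 1 | S _ => INR n + 1 end) with (INR (S n)).
      replace (1 + - x) with (1 - x) by ring. ring. }
    assert (D3 := is_derive_mult _ _ x _ _ D1 D2 Rmult_comm).
    apply (is_derive_eq _ _ _ _ D3).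
    { change (PSeries (PS_derive (g n)) x * ((1 - x) * (1 - x) ^ n) +
              PSeries (g n) x * (- INR (S n) * (1 - x) ^ n) = 0).
      transitivity ((1 - x) ^ n * ((1 - x) * PSeries (PS_derive (g n)) x - (INR n + 1) * PSeries (g n) x)).
      rewrite S_INR; ring.
      rewrite (S1 n x (abs_lt1 x Hx)). ring. } }
  assert (Hc := const_deriv0 h Hd y Hy).
  unfold h in Hc. rewrite PSeries_0, g_0 in Hc.
  replace ((1 - 0) ^ S n) with 1 in Hc by (rewrite Rminus_0_r, pow1; reflexivity).
  assert (0 < (1 - y) ^ S n) by (apply pow_lt; lra).
  apply (Rmult_eq_reg_r ((1 - y) ^ S n)). rewrite Hc. field. lra. lra.
Qed.

Lemma Pe_val n (s : R) : 0 < s < 1 ->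
  PSeries (e n) (-(s^2)) = (2 * INR n + 1) * Qf n s / s ^ (2*n+1).
Proof.
  intros Hs.
  set (psi := fun s : R => s ^ (2*n+1) * PSeries (e n) (-(s^2)) - (2 * INR n + 1) * Qf n s).
  assert (Hd : forall x, -1 < x < 1 -> is_derive psi x 0).
  { intros x Hx.
    assert (Hy : -1 < -(x^2) < 1) by (simpl; split; nra).
    assert (DP := is_derive_PSeries _ _ (in_e n _ (abs_lt1 _ Hy))).
    assert (Din : is_derive (fun s : R => -(s^2)) x (-(2*x))).
    { auto_derive. auto. ring. }
    assert (Dc := is_derive_comp _ _ x _ _ DP Din).
    assert (Dpow : is_derive (fun s : R => s ^ (2*n+1)) x (INR (2*n+1) * x ^ (2*n))).
    { auto_derive. auto. replace (n + (n + 0) + 1)%nat with (2*n+1)%nat by lia. replace (Init.Nat.pred (2*n+1)) with (2*n)%nat by lia. ring. }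
    assert (Dm := is_derive_mult _ _ x _ _ Dpow Dc Rmult_comm).
    assert (DQ := is_derive_scal _ x (2 * INR n + 1) _ (Qf_derive n x)).
    assert (D := is_derive_minus _ _ x _ _ Dm DQ).
    apply (is_derive_eq _ _ _ _ D).
    change (INR (2*n+1) * x ^ (2*n) * PSeries (e n) (-(x^2)) + x ^ (2*n+1) * ((-(2*x)) * PSeries (PS_derive (e n)) (-(x^2)))
            - (2 * INR n + 1) * (x ^ (2*n) / (1 + x^2) ^ (S n)) = 0).
    assert (H2 := S2 n _ (abs_lt1 _ Hy)).
    rewrite (Pg_val n _ Hy) in H2.
    replace (1 - - (x^2)) with (1 + x^2) in H2 by ring.
    replace (x ^ (2*n+1)) with (x ^ (2*n) * x) by (rewrite pow_add; ring).
    rewrite plus_INR, mult_INR. simpl (INR 2). simpl (INR 1).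
    assert (0 < (1 + x^2) ^ S n) by (apply pow_lt; nra).
    transitivity (x ^ (2*n) * ((2 * INR n + 1) * PSeries (e n) (-(x^2)) + 2 * - (x^2) * PSeries (PS_derive (e n)) (-(x^2))
                   - (2 * INR n + 1) / (1 + x^2) ^ S n)).
    field. lra.
    rewrite H2. field. lra. }
  assert (Hc := const_deriv0 psi Hd s ltac:(lra)).
  unfold psi in Hc. rewrite Qf_0 in Hc.
  rewrite pow_i in Hc by lia.
  assert (0 < s ^ (2*n+1)) by (apply pow_lt; lra).
  apply (Rmult_eq_reg_r (s ^ (2*n+1))); [| lra].
  field_simplify; [| lra]. lra.
Qed.

Lemma const_val n :
  INR (dfact (2 * n + 1)) / INR (dfact (2 * n)) * (PI / 4)
  + (2 * INR n + 1) / 2 ^ (2 * n)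
    * sum_n_m (fun k => (-1) ^ k * Binomial.C (2 * n - k) n
                         * Rpower 2 (INR k / 2) / INR k
                         * sin (3 * INR k * PI / 4)) 1 n
  = (2 * INR n + 1) * Qf n 1.
Proof.
  assert (HS : sum_n_m (fun k => (-1) ^ k * Binomial.C (2 * n - k) n
                         * Rpower 2 (INR k / 2) / INR k
                         * sin (3 * INR k * PI / 4)) 1 n = Sn n).
  { unfold Sn. apply (sR_ext (fun k => (-1) ^ k * Binomial.C (2 * n - k) n
                         * Rpower 2 (INR k / 2) / INR k
                         * sin (3 * INR k * PI / 4))).
    intros k Hk. destruct (trig k) as [Ht _]. rewrite <- Ht.
    assert (INR k <> 0) by (apply not_0_INR; lia). field. auto. }
  rewrite HS, Qclosed, dfact_ratio.
  rewrite pow_mult. replace (2^2) with 4 by ring.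
  assert (4 ^ n <> 0) by (apply pow_nonzero; lra).
  field. auto.
Qed.

Theorem corollary4p1 (n : nat) :
  filterlim
    (fun x => hyp2F1_series (INR n + /2) (INR n + 1) (INR n + 3/2) x)
    (at_right (-1))
    (locally
       (INR (dfact (2 * n + 1)) / INR (dfact (2 * n)) * (PI / 4)
        + (2 * INR n + 1) / 2 ^ (2 * n)
          * sum_n_m (fun k => (-1) ^ k * Binomial.C (2 * n - k) n
                               * Rpower 2 (INR k / 2) / INR k
                               * sin (3 * INR k * PI / 4)) 1 n)).
Proof.
  rewrite const_val.
  set (G := fun x : R => (2 * INR n + 1) * Qf n (sqrt (- x)) / sqrt (- x) ^ (2*n+1)).
  assert (HG : G (-1) = (2 * INR n + 1) * Qf n 1).
  { unfold G. replace (- -1) with 1 by ring. rewrite sqrt_1, pow1. field. }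
  rewrite <- HG.
  apply (filterlim_ext_loc G).
  - exists (mkposreal 1 Rlt_0_1). intros y Hb Hy.
    assert (Hb' : Rabs (y - -1) < 1) by exact Hb.
    assert (Hy0 : y < 0) by (unfold Rabs in Hb'; destruct (Rcase_abs (y - -1)); lra).
    unfold G. rewrite hyp_eq.
    assert (Hs0 : 0 < sqrt (- y)) by (apply sqrt_lt_R0; lra).
    assert (Hs2 : sqrt (- y) ^ 2 = - y) by (apply pow2_sqrt; lra).
    assert (Hs1 : sqrt (- y) < 1) by nra.
    rewrite <- (Pe_val n (sqrt (-y)) (conj Hs0 Hs1)). rewrite Hs2, Ropp_involutive. reflexivity.
  - apply (filterlim_filter_le_1 (F := locally (-1))).
    apply filter_le_within.
    apply (@ex_derive_continuous R_AbsRing R_NormedModule G (-1)). unfold G.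
    assert (HQ : forall z, ex_derive (Qf n) z) by (intros z; eexists; apply Qf_derive).
    auto_derive. repeat split; auto.
    all: try lra.
    all: apply pow_nonzero; apply Rgt_not_eq; apply sqrt_lt_R0; lra.
Qed.
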